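(* Let $\mathbf A$ be a semisimple Pavelka algebra and $O\colon A\to A$ a closure operator. The following are equivalent: (i) $\mathbf r\cdot O(x)\le O(\mathbf r\cdot x)$ for all $x\in A$ and all constants $\mathbf r$; (ii) there exist a set $G$ and a fuzzy relation $I\colon\mathrm{Spec_M}\mathbf A\times G\to[0,1]$ (a fuzzy formal context $(\mathrm{Spec_M}\mathbf A,G,I)$) such that $n_{\mathbf A}(O(x))=h_I(d_I(n_{\mathbf A}(x)))$ for all $x\in A$.
   Context: An MV-algebra $(A;\oplus,\neg,0)$ carries derived operations $1=\neg0$, $x\cdot y=\neg(\neg x\oplus\neg y)$, $x\rightarrow y=\neg x\oplus y$, order $x\le y$ iff $\neg x\oplus y=1$. The standard MV-algebra is $[0,1]$ with $x\oplus y=\min\{x+y,1\}$, $\neg x=1-x$ (so $x\cdot y=\max\{0,x+y-1\}$, $x\rightarrow y=\min\{1,1-x+y\}$). A Pavelka algebra is $\mathbf A=(A;\oplus,\neg,\{\mathbf r\mid r\in[0,1]\cap\mathbb Q\})$ with $(A;\oplus,\neg,\mathbf 0)$ an MV-algebra, $\mathbf r\oplus\mathbf s=\mathbf t$ whenever $\min\{r+s,1\}=t$, $\neg\mathbf r=\mathbf s$ whenever $1-r=s$. Filters are filters of the MV-reduct; $\mathrm{Spec_M}\mathbf A$ is the set of maximal proper filters; for $F\in\mathrm{Spec_M}\mathbf A$, $\mathbf A/F$ embeds uniquely into $[0,1]$ and $x/F$ is identified with its image in $[0,1]$. Semisimple: MV-reduct is a subdirect product of simple MV-algebras. Natural embedding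 $n_{\mathbf A}\colon A\to[0,1]^{\mathrm{Spec_M}\mathbf A}$, $n_{\mathbf A}(x)(F)=x/F$. A closure operator is a monotone $O$ with $x\le O(x)$, $O(O(x))=O(x)$. For $I\colon M\times G\to[0,1]$ (with $M=\mathrm{Spec_M}\mathbf A$): $d_I\colon[0,1]^M\to[0,1]^G$, $d_I(x)(g)=\bigwedge_{m\in M}(x(m)\rightarrow I(m,g))$; $h_I\colon[0,1]^G\to[0,1]^M$, $h_I(y)(m)=\bigwedge_{g\in G}(y(g)\rightarrow I(m,g))$. *)

(* Defs.v *)
From Stdlib Require Import Reals QArith Qreals ClassicalEpsilon.
Open Scope R_scope.

Record MVAlg := {
  car :> Type;
  oplus : car -> car -> car;
  neg : car -> car;
  zero : car;
  mv_assoc : forall x y z, oplus (oplus x y) z = oplus x (oplus y z);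
  mv_comm : forall x y, oplus x y = oplus y x;
  mv_zero : forall x, oplus x zero = x;
  mv_negneg : forall x, neg (neg x) = x;
  mv_one : forall x, oplus x (neg zero) = neg zero;
  mv_luk : forall x y, oplus (neg (oplus (neg x) y)) y = oplus (neg (oplus (neg y) x)) x
}.

Section MVDerived.
Variable A : MVAlg.
Definition one : A := neg A (zero A).
Definition mvmul (x y : A) : A := neg A (oplus A (neg A x) (neg A y)).
Definition mvimp (x y : A) : A := oplus A (neg A x) y.
Definition mvle (x y : A) : Prop := oplus A (neg A x) y = one.

Definition is_filter (F : A -> Prop) : Prop :=
  F one /\ (forall x y, F x -> mvle x y -> F y) /\
  (forall x y, F x -> F y -> F (mvmul x y)).
Definition proper_filter (F : A -> Prop) : Prop := is_filter F /\ ~ F (zero A).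
Definition maximal_filter (F : A -> Prop) : Prop :=
  proper_filter F /\
  forall G, proper_filter G -> (forall x, F x -> G x) -> forall x, G x -> F x.

Definition simple_mv : Prop :=
  zero A <> one /\
  forall F, is_filter F -> (forall x, F x -> x = one) \/ (forall x, F x).
End MVDerived.

Definition mv_hom (A B : MVAlg) (f : A -> B) : Prop :=
  (forall x y, f (oplus A x y) = oplus B (f x) (f y)) /\
  (forall x, f (neg A x) = neg B (f x)) /\ f (zero A) = zero B.

(** Semisimple: A is (isomorphic to) a subdirect product of simple MV-algebras,
    i.e. there is a family of simple MV-algebras B_i and surjective
    homomorphisms f_i : A -> B_i which jointly separate points. *)
Definition semisimple_mv (A : MVAlg) : Prop :=
  exists (I : Type) (B : I -> MVAlg) (f : forall i, A -> B i),
    (forall i, simple_mv (B i)) /\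
    (forall i, mv_hom A (B i) (f i)) /\
    (forall i (b : B i), exists x, f i x = b) /\
    (forall x y, (forall i, f i x = f i y) -> x = y).

Definition inQ01 (r : Q) : Prop := 0 <= Q2R r <= 1.

Record Pavelka := {
  mvr :> MVAlg;
  cst : Q -> mvr;
  cst_zero : cst 0%Q = zero mvr;
  cst_oplus : forall r s t, inQ01 r -> inQ01 s -> inQ01 t ->
     Rmin (Q2R r + Q2R s) 1 = Q2R t -> oplus mvr (cst r) (cst s) = cst t;
  cst_neg : forall r s, inQ01 r -> inQ01 s ->
     1 - Q2R r = Q2R s -> neg mvr (cst r) = cst s
}.

Definition SpecM (A : MVAlg) : Type := {F : A -> Prop | maximal_filter A F}.

Definition unit_hom (A : MVAlg) (h : A -> R) : Prop :=
  (forall x, 0 <= h x <= 1) /\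
  (forall x y, h (oplus A x y) = Rmin (h x + h y) 1) /\
  (forall x, h (neg A x) = 1 - h x) /\ h (zero A) = 0.

(** For a maximal filter F, A/F embeds uniquely into [0,1]; the composite
    A -> A/F -> [0,1] is the unique homomorphism into [0,1] whose 1-set is F.
    x/F is the image of x under it. *)
Definition quot_val (A : MVAlg) (F : SpecM A) : A -> R :=
  epsilon (inhabits (fun _ : A => 0))
    (fun h => unit_hom A h /\ forall y, h y = 1 <-> proj1_sig F y).

Definition natemb (A : MVAlg) (x : A) : SpecM A -> R :=
  fun F => quot_val A F x.

Definition closure_op (A : MVAlg) (O : A -> A) : Prop :=
  (forall x y, mvle A x y -> mvle A (O x) (O y)) /\
  (forall x, mvle A x (O x)) /\
  (forall x, O (O x) = O x).

Definition Rimp (a b : R) : R := Rmin 1 (1 - a + b).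

Definition inf01 {X : Type} (f : X -> R) : R :=
  epsilon (inhabits 0) (fun r => 0 <= r <= 1 /\ (forall i, r <= f i) /\
    (forall s, 0 <= s <= 1 -> (forall i, s <= f i) -> s <= r)).

Definition dI {M G : Type} (I : M -> G -> R) (x : M -> R) : G -> R :=
  fun g => inf01 (fun m => Rimp (x m) (I m g)).
Definition hI {M G : Type} (I : M -> G -> R) (y : G -> R) : M -> R :=
  fun m => inf01 (fun g => Rimp (y g) (I m g)).

(* Main.v *)
Require Import Defs.
From Stdlib Require Import Reals QArith Qreals.
Open Scope R_scope.
From Stdlib Require Import ClassicalEpsilon Classical FunctionalExtensionality Lra Lia.
Require Import Defs.

Notation "x +' y" := (oplus _ x y) (at level 50, left associativity).
Notation "~' x" := (neg _ x) (at level 35, right associativity).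


Lemma zero_l (A : MVAlg) (x : A) : zero A +' x = x.
Proof. rewrite mv_comm. apply mv_zero. Qed.
Lemma one_r (A : MVAlg) (x : A) : x +' one A = one A.
Proof. apply mv_one. Qed.
Lemma one_l (A : MVAlg) (x : A) : one A +' x = one A.
Proof. rewrite mv_comm. apply mv_one. Qed.
Lemma neg_one (A : MVAlg) : ~' one A = zero A.
Proof. unfold one. apply mv_negneg. Qed.
Lemma negx_x (A : MVAlg) (x : A) : ~' x +' x = one A.
Proof.
  pose proof (mv_luk A (one A) x) as H.
  rewrite neg_one, zero_l in H. rewrite H. apply mv_one.
Qed.
Lemma x_negx (A : MVAlg) (x : A) : x +' ~' x = one A.
Proof. rewrite mv_comm. apply negx_x. Qed.
Lemma mvle_refl (A : MVAlg) (x : A) : mvle A x x.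
Proof. apply negx_x. Qed.
Lemma mvle_antisym (A : MVAlg) (x y : A) : mvle A x y -> mvle A y x -> x = y.
Proof.
  unfold mvle; intros H1 H2.
  pose proof (mv_luk A x y) as H. rewrite H1, H2, neg_one, !zero_l in H. auto.
Qed.
Lemma mvle_ex (A : MVAlg) (x y : A) : mvle A x y <-> exists z, y = x +' z.
Proof.
  unfold mvle; split.
  - intros H. pose proof (mv_luk A x y) as L. rewrite H, neg_one, zero_l in L.
    exists (~' (~' y +' x)). transitivity (~' (~' y +' x) +' x); [exact L | apply mv_comm].
  - intros [z ->]. rewrite <- mv_assoc, negx_x. apply one_l.
Qed.
Lemma mvle_trans (A : MVAlg) (x y z : A) : mvle A x y -> mvle A y z -> mvle A x z.
Proof.
  rewrite !mvle_ex. intros [u ->] [w ->]. exists (u +' w). apply mv_assoc.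
Qed.
Lemma mvle_oplus_r (A : MVAlg) (x y z : A) : mvle A x y -> mvle A (x +' z) (y +' z).
Proof.
  rewrite !mvle_ex. intros [u ->]. exists u. rewrite !mv_assoc, (mv_comm _ u z). auto.
Qed.
Lemma mvle_oplus_l (A : MVAlg) (x y z : A) : mvle A x y -> mvle A (z +' x) (z +' y).
Proof. intros H. rewrite (mv_comm _ z x), (mv_comm _ z y). now apply mvle_oplus_r. Qed.
Lemma mvle_neg (A : MVAlg) (x y : A) : mvle A x y -> mvle A (~' y) (~' x).
Proof. unfold mvle. rewrite mv_negneg, mv_comm. auto. Qed.
Lemma mvle_self (A : MVAlg) (x y : A) : mvle A x (x +' y).
Proof. apply mvle_ex. eauto. Qed.
Lemma mvle_self' (A : MVAlg) (x y : A) : mvle A x (y +' x).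
Proof. rewrite mv_comm. apply mvle_self. Qed.
Lemma mvle_zero (A : MVAlg) (x : A) : mvle A (zero A) x.
Proof. unfold mvle. apply one_l. Qed.
Lemma mvle_one (A : MVAlg) (x : A) : mvle A x (one A).
Proof. unfold mvle. apply one_r. Qed.
Lemma le_zero_eq (A : MVAlg) (x : A) : mvle A x (zero A) -> x = zero A.
Proof. intros H. apply mvle_antisym; auto. apply mvle_zero. Qed.
Lemma one_le_eq (A : MVAlg) (x : A) : mvle A (one A) x -> x = one A.
Proof. intros H. apply mvle_antisym; auto. apply mvle_one. Qed.

Lemma neg_mul (A : MVAlg) (x y : A) : ~' (mvmul A x y) = ~' x +' ~' y.
Proof. unfold mvmul. apply mv_negneg. Qed.
Lemma mul_comm (A : MVAlg) (x y : A) : mvmul A x y = mvmul A y x.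
Proof. unfold mvmul. now rewrite mv_comm. Qed.
Lemma mul_assoc (A : MVAlg) (x y z : A) : mvmul A (mvmul A x y) z = mvmul A x (mvmul A y z).
Proof. unfold mvmul. rewrite !mv_negneg. now rewrite mv_assoc. Qed.
Lemma mul_one (A : MVAlg) (x : A) : mvmul A x (one A) = x.
Proof. unfold mvmul. rewrite neg_one, mv_zero. apply mv_negneg. Qed.
Lemma mul_one_l (A : MVAlg) (x : A) : mvmul A (one A) x = x.
Proof. rewrite mul_comm. apply mul_one. Qed.
Lemma mul_zero (A : MVAlg) (x : A) : mvmul A x (zero A) = zero A.
Proof. unfold mvmul. fold (one A). rewrite one_r. apply neg_one. Qed.
Lemma mul_negx (A : MVAlg) (x : A) : mvmul A x (~' x) = zero A.
Proof. unfold mvmul. rewrite mv_negneg, negx_x. apply neg_one. Qed.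
Lemma mvle_mul (A : MVAlg) (x y z : A) : mvle A x y -> mvle A (mvmul A x z) (mvmul A y z).
Proof. intros H. unfold mvmul. apply mvle_neg, mvle_oplus_r, mvle_neg, H. Qed.
Lemma mvle_mul2 (A : MVAlg) (x y z w : A) : mvle A x y -> mvle A z w -> mvle A (mvmul A x z) (mvmul A y w).
Proof.
  intros H1 H2. apply mvle_trans with (mvmul A y z). now apply mvle_mul.
  rewrite (mul_comm _ y z), (mul_comm _ y w). now apply mvle_mul.
Qed.
Lemma mul_le_l (A : MVAlg) (x y : A) : mvle A (mvmul A x y) x.
Proof. unfold mvle. rewrite neg_mul. rewrite (mv_comm _ (~' x)), mv_assoc, negx_x. apply one_r. Qed.
Lemma resid (A : MVAlg) (x y z : A) : mvle A (mvmul A x y) z <-> mvle A x (mvimp A y z).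
Proof. unfold mvle, mvimp. rewrite neg_mul, mv_assoc. tauto. Qed.
Lemma modus (A : MVAlg) (y z : A) : mvle A (mvmul A y (mvimp A y z)) z.
Proof. rewrite mul_comm. apply resid. apply mvle_refl. Qed.

Lemma join_le (A : MVAlg) (u v : A) : mvle A v u -> ~' (~' u +' v) +' v = u.
Proof. intros H. rewrite mv_luk. unfold mvle in H. rewrite H, neg_one. apply zero_l. Qed.

Definition meet (A : MVAlg) (x y : A) := mvmul A x (~' x +' y).
Lemma ident1 (A : MVAlg) (x y : A) : ~' x +' meet A x y = ~' x +' y.
Proof.
  unfold meet, mvmul.
  rewrite mv_comm, (mv_comm _ (~' x) (~' (~' x +' y))).
  rewrite mv_luk, mv_negneg, <- (mv_assoc _ x), x_negx, one_l, neg_one. apply zero_l.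
Qed.
Lemma ident2 (A : MVAlg) (x y : A) : meet A x y +' mvmul A (~' x) y = y.
Proof.
  assert (E : meet A x y = mvmul A y (~' y +' x)).
  { unfold meet, mvmul. f_equal.
    pose proof (mv_luk A (~' y) (~' x)) as L. rewrite !mv_negneg in L.
    rewrite (mv_comm _ (~' x)), (mv_comm _ (~' y)), (mv_comm _ (~' x) y), (mv_comm _ (~' y) x).
    exact L. }
  rewrite E. unfold mvmul at 1.
  assert (E2: mvmul A (~' x) y = ~' (~' y +' x)).
  { unfold mvmul. rewrite mv_negneg, mv_comm. auto. }
  rewrite E2.
  apply join_le. rewrite <- E2. rewrite mul_comm. apply mul_le_l.
Qed.
Lemma ident3 (A : MVAlg) (x y : A) : x +' y +' mvmul A x y = x +' y.
Proof.
  pose proof (ident1 A (~' x) y) as H1. pose proof (ident2 A (~' x) y) as H2.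
  rewrite mv_negneg in H1, H2.
  rewrite <- H1, mv_assoc, H2. now rewrite H1.
Qed.

Fixpoint mpow (A : MVAlg) (x : A) (n : nat) : A :=
  match n with O => one A | S n => mvmul A x (mpow A x n) end.

Lemma Csym (A : MVAlg) (u v : A) : ~' u +' v = v -> ~' v +' u = u.
Proof.
  intros H. pose proof (mv_luk A u v) as L. rewrite H, negx_x in L.
  apply mvle_antisym. unfold mvle. now rewrite <- L. apply mvle_self'.
Qed.
Lemma Cpow (A : MVAlg) (u v : A) n : ~' u +' v = v -> ~' (mpow A u n) +' v = v.
Proof.
  intros H. induction n; simpl.
  - rewrite neg_one. apply zero_l.
  - rewrite neg_mul, mv_assoc, IHn. exact H.
Qed.
Lemma prelin (A : MVAlg) (a b : A) : ~' (mvimp A a b) +' mvimp A b a = mvimp A b a.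
Proof.
  unfold mvimp. pose proof (ident3 A a (~' b)) as H.
  unfold mvmul in H. rewrite !mv_negneg in H.
  rewrite mv_comm, (mv_comm _ (~' b) a). exact H.
Qed.
Lemma prelin_pow (A : MVAlg) (a b : A) n m :
  mpow A (mvimp A a b) n +' mpow A (mvimp A b a) m = one A.
Proof.
  pose proof (prelin A a b) as H.
  apply (Cpow _ _ _ n) in H. apply Csym in H. apply (Cpow _ _ _ m) in H.
  apply Csym in H. rewrite <- H at 1. rewrite <- mv_assoc, x_negx. apply one_l.
Qed.
Lemma mpow_add (A : MVAlg) (x : A) n m : mpow A x (n + m) = mvmul A (mpow A x n) (mpow A x m).
Proof.
  induction n; simpl. now rewrite mul_one_l. rewrite IHn. now rewrite mul_assoc.
Qed.
Lemma mpow_le (A : MVAlg) (x : A) n m : (n <= m)%nat -> mvle A (mpow A x m) (mpow A x n).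
Proof.
  intros H. replace m with (n + (m - n))%nat by lia. rewrite mpow_add. apply mul_le_l.
Qed.

Definition leF (A : MVAlg) (F : A -> Prop) (a b : A) := F (mvimp A a b).


Lemma imp_self (A : MVAlg) (a : A) : mvimp A a a = one A.
Proof. apply negx_x. Qed.
Lemma leF_of_le (A : MVAlg) F (a b : A) : is_filter A F -> mvle A a b -> leF A F a b.
Proof. intros [H1 _] H. unfold leF. unfold mvle in H. unfold mvimp. now rewrite H. Qed.
Lemma leF_refl (A : MVAlg) F (a : A) : is_filter A F -> leF A F a a.
Proof. intros H. apply leF_of_le; auto. apply mvle_refl. Qed.
Lemma imp_trans_le (A : MVAlg) (a b c : A) :
  mvle A (mvmul A (mvimp A a b) (mvimp A b c)) (mvimp A a c).
Proof.
  apply (proj1 (resid _ _ _ _)). rewrite mul_comm, <- mul_assoc.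
  apply mvle_trans with (mvmul A b (mvimp A b c)); [|apply modus].
  apply mvle_mul. apply modus.
Qed.
Lemma leF_trans (A : MVAlg) F (a b c : A) : is_filter A F -> leF A F a b -> leF A F b c -> leF A F a c.
Proof.
  intros [H1 [H2 H3]] Hab Hbc. unfold leF in *.
  eapply H2. apply H3. exact Hab. exact Hbc. apply imp_trans_le.
Qed.
Lemma imp_oplus_le (A : MVAlg) (a b c : A) :
  mvle A (mvimp A a b) (mvimp A (a +' c) (b +' c)).
Proof.
  unfold mvimp.
  assert (H : mvle A (~' a) (~' (a +' c) +' c)).
  { pose proof (mv_luk A (~' a) c) as L. rewrite mv_negneg in L. rewrite L.
    apply mvle_self'. }
  apply mvle_trans with (~' (a +' c) +' c +' b). now apply mvle_oplus_r.
  rewrite !mv_assoc, (mv_comm _ c b). apply mvle_refl.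
Qed.
Lemma leF_oplus (A : MVAlg) F (a b c : A) : is_filter A F -> leF A F a b -> leF A F (a +' c) (b +' c).
Proof. intros [H1 [H2 H3]] H. unfold leF in *. eapply H2. exact H. apply imp_oplus_le. Qed.
Lemma leF_oplus2 (A : MVAlg) F (a b c d : A) : is_filter A F -> leF A F a b -> leF A F c d -> leF A F (a +' c) (b +' d).
Proof.
  intros HF H H'. apply leF_trans with (b +' c); auto. now apply leF_oplus.
  rewrite (mv_comm _ b c), (mv_comm _ b d). now apply leF_oplus.
Qed.
Lemma leF_neg (A : MVAlg) F (a b : A) : leF A F a b -> leF A F (~' b) (~' a).
Proof. unfold leF, mvimp. rewrite mv_negneg, mv_comm. auto. Qed.
Lemma leF_mul2 (A : MVAlg) F (a b c d : A) : is_filter A F -> leF A F a b -> leF A F c d -> leF A F (mvmul A a c) (mvmul A b d).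
Proof. intros HF H H'. unfold mvmul. apply leF_neg. apply leF_oplus2; auto; now apply leF_neg. Qed.
Lemma leF_pow (A : MVAlg) F (a b : A) n : is_filter A F -> leF A F a b -> leF A F (mpow A a n) (mpow A b n).
Proof. intros HF H. induction n; simpl. now apply leF_refl. now apply leF_mul2. Qed.

Lemma maximal_pow (A : MVAlg) F (x : A) : maximal_filter A F -> ~ F x -> exists n, F (~' (mpow A x n)).
Proof.
  intros [[HF Hp] Hmax] Hx.
  destruct HF as [F1 [F2 F3]].
  set (G := fun y => exists f n, F f /\ mvle A (mvmul A f (mpow A x n)) y).
  assert (GF : is_filter A G).
  { split; [|split].
    - exists (one A), O. split; auto. simpl. rewrite mul_one. apply mvle_refl.
    - intros a b [f [n [Hf Hle]]] Hab. exists f, n. split; auto. eapply mvle_trans; eauto.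
    - intros a b [f [n [Hf Hle]]] [g [m [Hg Hle']]]. exists (mvmul A f g), (n + m)%nat.
      split; auto. rewrite mpow_add.
      replace (mvmul A (mvmul A f g) (mvmul A (mpow A x n) (mpow A x m)))
        with (mvmul A (mvmul A f (mpow A x n)) (mvmul A g (mpow A x m))).
      now apply mvle_mul2.
      rewrite !mul_assoc. f_equal. rewrite <- !mul_assoc. f_equal. apply mul_comm. }
  destruct (classic (G (zero A))) as [HG|HG].
  - destruct HG as [f [n [Hf Hle]]]. exists n. eapply F2. exact Hf.
    apply resid in Hle. unfold mvimp in Hle. now rewrite mv_zero in Hle.
  - exfalso. apply Hx. apply (Hmax G). split; auto.
    + intros y Hy. exists y, O. split; auto. simpl. rewrite mul_one. apply mvle_refl.
    + exists (one A), 1%nat. split; auto. simpl. rewrite mul_one, mul_one_l. apply mvle_refl.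
Qed.

Lemma maximal_lin (A : MVAlg) F (a b : A) : maximal_filter A F -> leF A F a b \/ leF A F b a.
Proof.
  intros HM. unfold leF.
  destruct (classic (F (mvimp A a b))) as [H|H]; auto.
  destruct (classic (F (mvimp A b a))) as [H'|H']; auto.
  exfalso. destruct (maximal_pow A F _ HM H) as [n Hn].
  destruct (maximal_pow A F _ HM H') as [m Hm].
  destruct HM as [[[F1 [F2 F3]] Hp] _]. apply Hp.
  pose proof (F3 _ _ Hn Hm) as X. unfold mvmul in X. rewrite !mv_negneg, prelin_pow, neg_one in X.
  exact X.
Qed.

Ltac rmm := unfold Rmin, Rmax in *; repeat match goal with |- context [Rle_dec ?a ?b] => destruct (Rle_dec a b) | H : context [Rle_dec ?a ?b] |- _ => destruct (Rle_dec a b) end; lra.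

Lemma Q2R1 : Q2R 1%Q = 1. Proof. apply RMicromega.Q2R_1. Qed.
Lemma Q2R0 : Q2R 0%Q = 0. Proof. apply RMicromega.Q2R_0. Qed.

Lemma IZR_pos_INR (p : positive) : IZR (Zpos p) = INR (Pos.to_nat p).
Proof. rewrite INR_IZR_INZ. f_equal. lia. Qed.

Lemma Q2R_make (z : Z) (p : positive) : Q2R (Qmake z p) = IZR z / INR (Pos.to_nat p).
Proof. unfold Q2R. simpl. rewrite IZR_pos_INR. reflexivity. Qed.

Lemma Qdense (a b : R) : a < b -> exists q : Q, a < Q2R q < b.
Proof.
  intros Hab. destruct (archimed_cor1 (b - a)) as [N [HN HN0]]; [lra|].
  assert (HNR : 0 < INR N) by (apply lt_0_INR; lia).
  destruct (archimed (a * INR N)) as [H1 H2].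
  exists (Qmake (up (a * INR N)) (Pos.of_nat N)).
  rewrite Q2R_make. rewrite Nat2Pos.id by lia.
  set (z := IZR (up (a * INR N))) in *.
  assert (K: 1 < (b - a) * INR N).
  { apply Rmult_lt_compat_r with (r := INR N) in HN; auto. rewrite Rinv_l in HN; lra. }
  split; apply (Rmult_lt_reg_r (INR N)); auto; replace (z / INR N * INR N) with z by (field; lra); nra.
Qed.

Lemma arch_nat (e : R) : 0 < e -> exists n : nat, 1 <= INR n * e.
Proof.
  intros He. destruct (archimed_cor1 e He) as [N [HN HN0]].
  exists N. assert (0 < INR N) by (apply lt_0_INR; lia).
  apply Rmult_lt_compat_l with (r := INR N) in HN; auto. rewrite Rinv_r in HN; lra.
Qed.


Lemma cst_eqR (A : Pavelka) r s : inQ01 r -> inQ01 s -> Q2R r = Q2R s -> cst A r = cst A s.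
Proof.
  intros Hr Hs E. rewrite <- (zero_l A (cst A r)). rewrite <- (cst_zero A).
  apply cst_oplus; unfold inQ01 in *; rewrite ?Q2R0; try lra. rmm.
Qed.

Lemma inQ01_0 : inQ01 0%Q. Proof. unfold inQ01. rewrite Q2R0. lra. Qed.
Lemma inQ01_1 : inQ01 1%Q. Proof. unfold inQ01. rewrite Q2R1. lra. Qed.

Lemma cst_one (A : Pavelka) : cst A 1%Q = one A.
Proof.
  unfold one. rewrite <- (cst_zero A). symmetry. apply cst_neg. apply inQ01_0. apply inQ01_1.
  rewrite Q2R0, Q2R1. lra.
Qed.

Lemma Qex (v : R) (r : Q) : Q2R r = v -> exists t : Q, Q2R t = v. Proof. eauto. Qed.

Lemma cst_negq (A : Pavelka) r : inQ01 r -> inQ01 (1 - r)%Q /\ neg A (cst A r) = cst A (1 - r)%Q.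
Proof.
  intros Hr. assert (H: inQ01 (1 - r)%Q) by (unfold inQ01 in *; rewrite Q2R_minus, Q2R1; lra).
  split; auto. apply cst_neg; auto. rewrite Q2R_minus, Q2R1. lra.
Qed.

Lemma cst_plus (A : Pavelka) r s : inQ01 r -> inQ01 s ->
  exists t, inQ01 t /\ Q2R t = Rmin (Q2R r + Q2R s) 1 /\ oplus A (cst A r) (cst A s) = cst A t.
Proof.
  intros Hr Hs. unfold inQ01 in *.
  destruct (Rle_dec (Q2R r + Q2R s) 1) as [H|H].
  - exists (r + s)%Q. rewrite Q2R_plus. assert (E: Rmin (Q2R r + Q2R s) 1 = Q2R r + Q2R s) by rmm.
    split; [|split]; try lra. apply cst_oplus; unfold inQ01; rewrite ?Q2R_plus; lra.
  - exists 1%Q. rewrite Q2R1. assert (E: Rmin (Q2R r + Q2R s) 1 = 1) by rmm.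
    split; [|split]; try lra; try apply inQ01_1. apply cst_oplus; unfold inQ01; rewrite ?Q2R1; lra.
Qed.

Lemma cst_mul (A : Pavelka) r s : inQ01 r -> inQ01 s ->
  exists t, inQ01 t /\ Q2R t = Rmax 0 (Q2R r + Q2R s - 1) /\ mvmul A (cst A r) (cst A s) = cst A t.
Proof.
  intros Hr Hs. destruct (cst_negq A r Hr) as [Hr' Er]. destruct (cst_negq A s Hs) as [Hs' Es].
  destruct (cst_plus A _ _ Hr' Hs') as [t [Ht [Et Et']]].
  destruct (cst_negq A t Ht) as [Ht2 Et2].
  exists (1 - t)%Q. split; auto. split.
  - rewrite Q2R_minus, Q2R1, Et, !Q2R_minus, Q2R1. rmm.
  - unfold mvmul. rewrite Er, Es, Et', Et2. reflexivity.
Qed.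

Lemma cst_le (A : Pavelka) r s : inQ01 r -> inQ01 s -> Q2R r <= Q2R s -> mvle A (cst A r) (cst A s).
Proof.
  intros Hr Hs H. unfold mvle. destruct (cst_negq A r Hr) as [Hr' ->].
  destruct (cst_plus A _ _ Hr' Hs) as [t [Ht [Et ->]]].
  rewrite <- cst_one. apply cst_eqR; auto. apply inQ01_1. rewrite Et, Q2R1, Q2R_minus, Q2R1. rmm.
Qed.

Lemma cst_pow (A : Pavelka) d n : inQ01 d ->
  exists t, inQ01 t /\ Q2R t = Rmax 0 (1 - INR n * (1 - Q2R d)) /\ mpow A (cst A d) n = cst A t.
Proof.
  intros Hd. induction n.
  - exists 1%Q. split. apply inQ01_1. split. rewrite Q2R1. simpl. rmm. simpl. now rewrite cst_one.
  - destruct IHn as [t [Ht [Et Et']]]. destruct (cst_mul A d t Hd Ht) as [u [Hu [Eu Eu']]].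
    exists u. split; auto. split.
    + rewrite Eu, Et, S_INR. unfold inQ01 in Hd.
      assert (0 <= INR n) by apply pos_INR.
      assert (0 <= INR n * (1 - Q2R d)) by (apply Rmult_le_pos; lra).
      rmm.
    + simpl. rewrite Et'. exact Eu'.
Qed.

Lemma filter_pow (A : MVAlg) F (x : A) n : is_filter A F -> F x -> F (mpow A x n).
Proof. intros [F1 [F2 F3]] Hx. induction n; simpl; auto. Qed.

Lemma K1 (A : Pavelka) F r s : proper_filter A F -> inQ01 r -> inQ01 s -> Q2R s < Q2R r ->
  ~ leF A F (cst A r) (cst A s).
Proof.
  intros [HF Hp] Hr Hs Hlt H. unfold leF, mvimp in H.
  destruct (cst_negq A r Hr) as [Hr' E]. rewrite E in H.
  destruct (cst_plus A _ _ Hr' Hs) as [t [Ht [Et Et']]]. rewrite Et' in H.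
  rewrite Q2R_minus, Q2R1 in Et. unfold inQ01 in *.
  destruct (arch_nat (1 - Q2R t)) as [n Hn]. rmm.
  destruct (cst_pow A t n Ht) as [u [Hu [Eu Eu']]].
  apply Hp. rewrite <- (cst_zero A).
  assert (E0: cst A u = cst A 0%Q). { apply cst_eqR; auto. apply inQ01_0. rewrite Q2R0, Eu. rmm. }
  rewrite <- E0, <- Eu'. apply filter_pow; auto.
Qed.

Definition Pv (A : Pavelka) (F : A -> Prop) (x : A) (v : R) :=
  0 <= v <= 1 /\ forall r, inQ01 r ->
    (Q2R r < v -> leF A F (cst A r) x) /\ (v < Q2R r -> leF A F x (cst A r)).

Lemma Qdense01 (a b : R) : 0 <= a -> a < b -> b <= 1 -> exists q, inQ01 q /\ a < Q2R q < b.
Proof. intros. destruct (Qdense a b) as [q Hq]; auto. exists q. unfold inQ01. split; lra. Qed.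

Lemma Pv_exists (A : Pavelka) F (x : A) : maximal_filter A F -> exists v, Pv A F x v.
Proof.
  intros HM. pose proof HM as [[HF Hp] _].
  set (E := fun y => exists r, inQ01 r /\ y = Q2R r /\ leF A F (cst A r) x).
  destruct (completeness E) as [v [Hub Hlub]].
  - exists 1. intros y [r [Hr [-> _]]]. apply Hr.
  - exists 0. exists 0%Q. split. apply inQ01_0. split. now rewrite Q2R0.
    apply leF_of_le; auto. rewrite cst_zero. apply mvle_zero.
  - exists v. assert (E0 : E 0). { exists 0%Q. split. apply inQ01_0. split. now rewrite Q2R0.
      apply leF_of_le; auto. rewrite cst_zero. apply mvle_zero. }
    assert (v0 : 0 <= v) by (apply Hub; auto).
    assert (v1 : v <= 1). { apply Hlub. intros y [r [Hr [-> _]]]. apply Hr. }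
    split; auto. intros r Hr. split.
    + intros Hlt. destruct (classic (exists y, E y /\ Q2R r < y)) as [[y [[s [Hs [-> Hsx]]] Hy]]|Hn].
      * apply leF_trans with (cst A s); auto. apply leF_of_le; auto. apply cst_le; auto; lra.
      * exfalso. assert (v <= Q2R r). { apply Hlub. intros y Ey. apply Rnot_lt_le. intros Hy. apply Hn. eauto. }
        lra.
    + intros Hlt. destruct (maximal_lin A F (cst A r) x HM) as [H|H]; auto.
      exfalso. assert (Q2R r <= v) by (apply Hub; exists r; auto). lra.
Qed.

Lemma Pv_unique (A : Pavelka) F (x : A) v w : proper_filter A F -> Pv A F x v -> Pv A F x w -> v = w.
Proof.
  intros HP [Hv Pv1] [Hw Pw1]. pose proof HP as [HF _].
  destruct (Rtotal_order v w) as [H|[H|H]]; auto; exfalso.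
  - destruct (Qdense01 v ((v + w)/2)) as [r1 [Hr1 E1]]; try lra.
    destruct (Qdense01 ((v + w)/2) w) as [r2 [Hr2 E2]]; try lra.
    apply (K1 A F r2 r1 HP Hr2 Hr1); try lra.
    apply leF_trans with x; auto. apply (Pw1 r2 Hr2). lra. apply (Pv1 r1 Hr1). lra.
  - destruct (Qdense01 w ((v + w)/2)) as [r1 [Hr1 E1]]; try lra.
    destruct (Qdense01 ((v + w)/2) v) as [r2 [Hr2 E2]]; try lra.
    apply (K1 A F r2 r1 HP Hr2 Hr1); try lra.
    apply leF_trans with x; auto. apply (Pv1 r2 Hr2). lra. apply (Pw1 r1 Hr1). lra.
Qed.

Lemma low_approx (A : Pavelka) F (x : A) v e : is_filter A F -> Pv A F x v -> 0 < e ->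
  exists r, inQ01 r /\ v - e < Q2R r /\ leF A F (cst A r) x.
Proof.
  intros HF [Hv P] He. destruct (Rlt_dec (v - e) 0).
  - exists 0%Q. split. apply inQ01_0. split. rewrite Q2R0; lra.
    apply leF_of_le; auto. rewrite cst_zero. apply mvle_zero.
  - destruct (Qdense01 (v - e) v) as [r [Hr E]]; try lra. exists r. split; auto. split. lra.
    apply (P r Hr). lra.
Qed.

Lemma up_approx (A : Pavelka) F (x : A) v e : is_filter A F -> Pv A F x v -> 0 < e ->
  exists r, inQ01 r /\ Q2R r < v + e /\ leF A F x (cst A r).
Proof.
  intros HF [Hv P] He. destruct (Rlt_dec 1 (v + e)).
  - exists 1%Q. split. apply inQ01_1. split. rewrite Q2R1; lra.
    apply leF_of_le; auto. rewrite cst_one. apply mvle_one.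
  - destruct (Qdense01 v (v + e)) as [r [Hr E]]; try lra. exists r. split; auto. split. lra.
    apply (P r Hr). lra.
Qed.

Lemma Pv_neg (A : Pavelka) F (x : A) v : Pv A F x v -> Pv A F (neg A x) (1 - v).
Proof.
  intros [Hv P]. split. lra. intros r Hr.
  destruct (cst_negq A r Hr) as [Hr' E].
  assert (E2 : cst A r = neg A (cst A (1 - r)%Q)).
  { destruct (cst_negq A _ Hr') as [Hr'' E']. rewrite E'. apply cst_eqR; auto.
    rewrite !Q2R_minus, Q2R1. lra. }
  split; intros Hlt.
  - rewrite E2. apply leF_neg. apply (P _ Hr'). rewrite Q2R_minus, Q2R1. lra.
  - rewrite <- (mv_negneg A (cst A r)). apply leF_neg. rewrite E. apply (P _ Hr'). rewrite Q2R_minus, Q2R1. lra.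
Qed.

Lemma Pv_oplus (A : Pavelka) F (x y : A) v w : is_filter A F -> Pv A F x v -> Pv A F y w ->
  Pv A F (oplus A x y) (Rmin (v + w) 1).
Proof.
  intros HF Px Py. pose proof Px as [Hv _]. pose proof Py as [Hw _].
  split. rmm. intros r Hr. split; intros Hlt.
  - set (e := (v + w - Q2R r) / 2).
    assert (He : 0 < e) by (unfold e; rmm).
    destruct (low_approx A F x v e HF Px He) as [r1 [Hr1 [E1 L1]]].
    destruct (low_approx A F y w e HF Py He) as [r2 [Hr2 [E2 L2]]].
    destruct (cst_plus A r1 r2 Hr1 Hr2) as [t [Ht [Et Et']]].
    apply leF_trans with (cst A t); auto.
    + apply leF_of_le; auto. apply cst_le; auto. rewrite Et. unfold inQ01 in *. unfold e in *. rmm.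
    + rewrite <- Et'. apply leF_oplus2; auto.
  - assert (Hlt' : v + w < Q2R r) by (unfold inQ01 in Hr; rmm).
    set (e := (Q2R r - v - w) / 2).
    assert (He : 0 < e) by (unfold e; lra).
    destruct (up_approx A F x v e HF Px He) as [r1 [Hr1 [E1 L1]]].
    destruct (up_approx A F y w e HF Py He) as [r2 [Hr2 [E2 L2]]].
    destruct (cst_plus A r1 r2 Hr1 Hr2) as [t [Ht [Et Et']]].
    apply leF_trans with (cst A t); auto.
    + rewrite <- Et'. apply leF_oplus2; auto.
    + apply leF_of_le; auto. apply cst_le; auto. rewrite Et. unfold inQ01 in *. unfold e in *. rmm.
Qed.

Lemma Pv_zero (A : Pavelka) F : is_filter A F -> Pv A F (zero A) 0.
Proof.
  intros HF. split. lra. intros r Hr. unfold inQ01 in Hr. split; intros H. lra.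
  apply leF_of_le; auto. apply mvle_zero.
Qed.

Lemma Pv_one_iff (A : Pavelka) F (x : A) : maximal_filter A F -> (Pv A F x 1 <-> F x).
Proof.
  intros HM. pose proof HM as [[HF Hp] _]. pose proof HF as [F1 [F2 F3]]. split.
  - intros [_ P]. apply NNPP. intros Hx. destruct (maximal_pow A F x HM Hx) as [n Hn].
    destruct (Qdense01 (INR n / (INR n + 1)) 1) as [r [Hr [E1 E2]]].
    + assert (0 <= INR n) by apply pos_INR. apply Rmult_le_pos; auto. left; apply Rinv_0_lt_compat; lra.
    + assert (0 <= INR n) by apply pos_INR. apply Rmult_lt_reg_r with (INR n + 1); try lra.
      unfold Rdiv. rewrite Rmult_assoc, Rinv_l; lra.
    + lra.
    + assert (L : leF A F (mpow A (cst A r) n) (cst A 0%Q)).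
      { apply leF_trans with (mpow A x n); auto. apply leF_pow; auto. apply (proj1 (P r Hr) E2).
        unfold leF, mvimp. rewrite cst_zero, mv_zero. exact Hn. }
      destruct (cst_pow A r n Hr) as [t [Ht [Et Et']]]. rewrite Et' in L.
      apply (K1 A F t 0%Q (conj HF Hp) Ht inQ01_0); auto. rewrite Q2R0, Et.
      assert (0 <= INR n) by apply pos_INR.
      assert (INR n < (INR n + 1) * Q2R r).
      { apply Rmult_lt_compat_r with (r := INR n + 1) in E1; try lra.
        unfold Rdiv in E1. rewrite Rmult_assoc, Rinv_l in E1; lra. }
      assert (INR n * (1 - Q2R r) < 1) by nra. rmm.
  - intros Hx. split. lra. intros r Hr. unfold inQ01 in Hr. split; intros H; [|lra].
    unfold leF, mvimp. eapply F2. exact Hx. apply mvle_self'.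
Qed.

Lemma quot_val_spec (A : Pavelka) (F : SpecM A) :
  unit_hom A (quot_val A F) /\ forall y, quot_val A F y = 1 <-> proj1_sig F y.
Proof.
  unfold quot_val. apply epsilon_spec.
  destruct F as [F HM]. simpl. pose proof HM as [[HF Hp] _].
  set (h := fun x => epsilon (inhabits 0) (Pv A F x)).
  assert (Hh : forall x, Pv A F x (h x)). { intros x. apply epsilon_spec. now apply Pv_exists. }
  exists h. split; [split; [|split; [|split]]|].
  - intros x. apply (Hh x).
  - intros x y. eapply Pv_unique; eauto. split; auto. apply Pv_oplus; auto.
  - intros x. eapply Pv_unique; eauto. split; auto. apply Pv_neg; auto.
  - eapply Pv_unique; eauto. split; auto. apply Pv_zero; auto.
  - intros y. rewrite <- (Pv_one_iff A F y HM). split.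
    + intros E. rewrite <- E. apply Hh.
    + intros P. eapply Pv_unique; eauto. split; auto.
Qed.


Lemma uh_one (A : MVAlg) q : unit_hom A q -> q (one A) = 1.
Proof. intros [H0 [H1 [H2 H3]]]. unfold one. rewrite H2, H3. lra. Qed.
Lemma uh_mul (A : MVAlg) q a b : unit_hom A q -> q (mvmul A a b) = Rmax 0 (q a + q b - 1).
Proof.
  intros Hq. pose proof Hq as [H0 [H1 [H2 H3]]]. unfold mvmul. rewrite H2, H1, !H2.
  pose proof (H0 a). pose proof (H0 b). rmm.
Qed.
Lemma uh_imp (A : MVAlg) q a b : unit_hom A q -> q (mvimp A a b) = Rmin (1 - q a + q b) 1.
Proof. intros Hq. pose proof Hq as [H0 [H1 [H2 H3]]]. unfold mvimp. rewrite H1, H2. reflexivity. Qed.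
Lemma uh_mono (A : MVAlg) q a b : unit_hom A q -> mvle A a b -> q a <= q b.
Proof.
  intros Hq H. pose proof (uh_imp A q a b Hq) as E. unfold mvle in H. unfold mvimp in E. rewrite H, uh_one in E; auto. pose proof (proj1 Hq a). pose proof (proj1 Hq b). rmm. Qed.

Lemma INR_Zof (k : nat) : IZR (Z.of_nat k) = INR k.
Proof. symmetry. apply INR_IZR_INZ. Qed.

Lemma uh_cst (A : Pavelka) q r : unit_hom A q -> inQ01 r -> q (cst A r) = Q2R r.
Proof.
  intros Hq Hr. pose proof Hq as [H0 [H1 [H2 H3]]].
  destruct r as [z p]. set (n := Pos.to_nat p).
  assert (Hn : (1 <= n)%nat) by (unfold n; lia).
  assert (HnR : 1 <= INR n) by (apply (le_INR 1); auto).
  set (u := fun k : nat => Qmake (Z.of_nat k) p).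
  assert (Qu : forall k, Q2R (u k) = INR k / INR n).
  { intros k. unfold u. rewrite Q2R_make, INR_Zof. reflexivity. }
  assert (Iu : forall k, (k <= n)%nat -> inQ01 (u k)).
  { intros k Hk. unfold inQ01. rewrite Qu. apply le_INR in Hk. assert (0 <= INR k) by apply pos_INR.
    split. apply Rmult_le_pos; auto. left; apply Rinv_0_lt_compat; lra.
    apply Rmult_le_reg_r with (INR n); try lra. unfold Rdiv. rewrite Rmult_assoc, Rinv_l; lra. }
  set (f1 := q (cst A (u 1%nat))).
  assert (Hf1 : 0 <= f1 <= 1) by apply H0.
  assert (Fk : forall k, (k <= n)%nat -> q (cst A (u k)) = Rmin (INR k * f1) 1).
  { induction k; intros Hk.
    - simpl. rewrite Rmult_0_l.
      replace (cst A (u 0%nat)) with (zero A). rewrite H3. rmm.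
      rewrite <- (cst_zero A). apply cst_eqR. apply inQ01_0. apply Iu; lia.
      rewrite Qu, Q2R0. simpl. unfold Rdiv. lra.
    - assert (E : cst A (u (S k)) = oplus A (cst A (u k)) (cst A (u 1%nat))).
      { symmetry. apply cst_oplus; try apply Iu; try lia. rewrite !Qu.
        assert (E1: INR k / INR n + INR 1 / INR n = INR (S k) / INR n).
        { rewrite (S_INR k). replace (INR 1) with 1 by reflexivity. field. lra. }
        rewrite E1. pose proof (Iu (S k) Hk) as I. unfold inQ01 in I. rewrite Qu in I. rmm. }
      rewrite E, H1, IHk by lia. fold f1. rewrite S_INR.
      assert (0 <= INR k * f1) by (apply Rmult_le_pos; [apply pos_INR | lra]).
      replace ((INR k + 1) * f1) with (INR k * f1 + f1) by ring. rmm. }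
  assert (Fn : Rmin (INR n * f1) 1 = 1).
  { rewrite <- Fk by lia. replace (cst A (u n)) with (one A). apply uh_one; auto.
    rewrite <- cst_one. apply cst_eqR. apply inQ01_1. apply Iu; lia. rewrite Qu, Q2R1. field. lra. }
  assert (Hf1n : f1 * INR n = 1).
  { destruct (Nat.eq_dec n 1) as [E|E].
    - pose proof (Fk 1%nat ltac:(lia)) as X. fold f1 in X. rewrite E in Fn. rewrite E. simpl in *. rmm.
    - assert (E2 : neg A (cst A (u 1%nat)) = cst A (u (n - 1)%nat)).
      { apply cst_neg; try apply Iu; try lia. rewrite !Qu. rewrite minus_INR by lia. simpl. field. lra. }
      pose proof (H2 (cst A (u 1%nat))) as X. rewrite E2, Fk in X by lia. fold f1 in X.
      rewrite minus_INR in X by lia. simpl in X.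
      replace ((INR n - 1) * f1) with (INR n * f1 - f1) in X by ring. rewrite Rmult_comm. unfold Rmin in *. destruct (Rle_dec (INR n * f1) 1); destruct (Rle_dec (INR n * f1 - f1) 1); nra. }
  assert (Hz : (0 <= z)%Z).
  { apply le_IZR. unfold inQ01 in Hr. rewrite Q2R_make in Hr. fold n in Hr.
    destruct Hr as [Hr _]. apply Rmult_le_reg_r with (/ INR n). apply Rinv_0_lt_compat; lra. lra. }
  set (k := Z.to_nat z).
  assert (Ek : IZR z = INR k). { unfold k. rewrite <- INR_Zof. f_equal. lia. }
  assert (Eq : Q2R (Qmake z p) = INR k / INR n). { rewrite Q2R_make, Ek. reflexivity. }
  assert (Hk : (k <= n)%nat).
  { apply INR_le. unfold inQ01 in Hr. rewrite Eq in Hr. destruct Hr as [_ Hr].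
    apply Rmult_le_reg_r with (/ INR n). apply Rinv_0_lt_compat; lra. rewrite Rinv_r; lra. }
  replace (cst A (Qmake z p)) with (cst A (u k)).
  2:{ apply cst_eqR; auto. rewrite Eq, Qu. reflexivity. }
  rewrite Fk, Eq by auto.
  assert (f1 = / INR n) by (apply (Rmult_eq_reg_r (INR n)); [rewrite Rinv_l|]; lra).
  subst f1. pose proof (Iu k Hk) as I. unfold inQ01 in I. rewrite Qu in I.
  unfold Rdiv in *. rewrite H. rmm.
Qed.

Lemma hom_one (A B : MVAlg) f : mv_hom A B f -> f (one A) = one B.
Proof. intros [H1 [H2 H3]]. unfold one. now rewrite H2, H3. Qed.
Lemma hom_mul (A B : MVAlg) f x y : mv_hom A B f -> f (mvmul A x y) = mvmul B (f x) (f y).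
Proof. intros [H1 [H2 H3]]. unfold mvmul. now rewrite H2, H1, !H2. Qed.
Lemma hom_le (A B : MVAlg) f x y : mv_hom A B f -> mvle A x y -> mvle B (f x) (f y).
Proof.
  intros Hf H. pose proof Hf as [H1 [H2 H3]]. unfold mvle in *.
  rewrite <- H2, <- H1, H. now apply hom_one.
Qed.

Lemma kernel_max (A B : MVAlg) f : simple_mv B -> mv_hom A B f ->
  maximal_filter A (fun x => f x = one B).
Proof.
  intros [Hnt Hs] Hf. assert (Hfilt : is_filter A (fun x => f x = one B)).
  { split; [|split].
    - now apply hom_one.
    - intros x y Hx Hxy. apply one_le_eq. rewrite <- Hx. now apply hom_le.
    - intros x y Hx Hy. rewrite hom_mul; auto. rewrite Hx, Hy. apply mul_one. }
  split. split; auto. destruct Hf as [_ [_ H3]]. rewrite H3. auto.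
  intros G [[G1 [G2 G3]] Gp] Hsub x Gx.
  set (H := fun b => exists y, G y /\ mvle B (f y) b).
  assert (HF : is_filter B H).
  { split; [|split].
    - exists (one A). split; auto. rewrite hom_one; auto. apply mvle_refl.
    - intros a b [y [Gy Ly]] Hab. exists y. split; auto. eapply mvle_trans; eauto.
    - intros a b [y [Gy Ly]] [z [Gz Lz]]. exists (mvmul A y z). split; auto.
      rewrite hom_mul; auto. now apply mvle_mul2. }
  destruct (Hs H HF) as [Hall|Hall].
  - apply Hall. exists x. split; auto. apply mvle_refl.
  - exfalso. destruct (Hall (zero B)) as [y [Gy Ly]]. apply le_zero_eq in Ly.
    apply Gp. rewrite <- (mul_negx A y). apply G3; auto. apply Hsub.
    destruct Hf as [_ [H2 _]]. rewrite H2, Ly. reflexivity.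
Qed.

Lemma order_reflect (A : Pavelka) (a b : A) : semisimple_mv A ->
  (forall F : SpecM A, natemb A a F <= natemb A b F) -> mvle A a b.
Proof.
  intros [I [B [f [Hsimp [Hhom [_ Hsep]]]]]] H.
  unfold mvle. fold (mvimp A a b). apply Hsep. intros i.
  rewrite hom_one by auto.
  set (F := exist _ (fun x => f i x = one (B i)) (kernel_max A (B i) (f i) (Hsimp i) (Hhom i)) : SpecM A).
  destruct (quot_val_spec A F) as [Hq Hone]. apply (Hone (mvimp A a b)).
  rewrite uh_imp by auto. specialize (H F). unfold natemb in H.
  pose proof (proj1 Hq a). pose proof (proj1 Hq b). rmm.
Qed.

Lemma inf01_spec {X : Type} (f : X -> R) : (forall i, 0 <= f i <= 1) ->
  0 <= inf01 f <= 1 /\ (forall i, inf01 f <= f i) /\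
  (forall s, 0 <= s <= 1 -> (forall i, s <= f i) -> s <= inf01 f).
Proof.
  intros Hf. unfold inf01. apply epsilon_spec.
  set (E := fun y => y = -1 \/ exists i, y = - f i).
  destruct (completeness E) as [m [Hub Hlub]].
  - exists 0. intros y [->|[i ->]]. lra. pose proof (Hf i). lra.
  - exists (-1). now left.
  - exists (- m). assert (m1 : -1 <= m) by (apply Hub; now left).
    assert (m0 : m <= 0). { apply Hlub. intros y [->|[i ->]]. lra. pose proof (Hf i). lra. }
    split. lra. split.
    + intros i. assert (- f i <= m) by (apply Hub; right; eauto). lra.
    + intros s Hs Hsi. assert (m <= - s). { apply Hlub. intros y [->|[i ->]]. lra. pose proof (Hsi i). lra. }
      lra.
Qed.

Lemma Rimp01 a b : 0 <= a <= 1 -> 0 <= b <= 1 -> 0 <= Rimp a b <= 1.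
Proof. intros. unfold Rimp. rmm. Qed.

Lemma dI01 {M G : Type} (I : M -> G -> R) x g : (forall m g, 0 <= I m g <= 1) -> (forall m, 0 <= x m <= 1) ->
  0 <= dI I x g <= 1.
Proof. intros HI Hx. unfold dI. apply inf01_spec. intros m. apply Rimp01; auto. Qed.
Lemma hI01 {M G : Type} (I : M -> G -> R) y m : (forall m g, 0 <= I m g <= 1) -> (forall g, 0 <= y g <= 1) ->
  0 <= hI I y m <= 1.
Proof. intros HI Hy. unfold hI. apply inf01_spec. intros g. apply Rimp01; auto. Qed.

Lemma main_ineq {M G : Type} (I : M -> G -> R) (a : M -> R) r F :
  (forall m g, 0 <= I m g <= 1) -> (forall m, 0 <= a m <= 1) -> 0 <= r <= 1 ->
  Rmax 0 (r + hI I (dI I a) F - 1) <= hI I (dI I (fun m => Rmax 0 (r + a m - 1))) F.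
Proof.
  intros HI Ha Hr.
  set (a' := fun m => Rmax 0 (r + a m - 1)).
  assert (Ha' : forall m, 0 <= a' m <= 1) by (intros m; unfold a'; pose proof (Ha m); rmm).
  assert (Hd : forall g, 0 <= dI I a g <= 1) by (intros; apply dI01; auto).
  assert (Hd' : forall g, 0 <= dI I a' g <= 1) by (intros; apply dI01; auto).
  assert (Key : forall g, Rmax 0 (r + dI I a' g - 1) <= dI I a g).
  { intros g. unfold dI at 2. apply inf01_spec.
    - intros m. apply Rimp01; auto.
    - pose proof (Hd' g). rmm.
    - intros m. pose proof (proj1 (proj2 (inf01_spec (fun m => Rimp (a' m) (I m g))
        (fun m => Rimp01 _ _ (Ha' m) (HI m g)))) m) as X. fold (dI I a' g) in X.
      unfold a', Rimp in *. pose proof (Ha m). pose proof (HI m g). pose proof (Hd' g). rmm. }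
  pose proof (inf01_spec (fun g => Rimp (dI I a g) (I F g)) (fun g => Rimp01 _ _ (Hd g) (HI F g))) as [S1 [S2 S3]].
  fold (hI I (dI I a) F) in S1, S2.
  unfold hI at 2. apply inf01_spec.
  - intros g. apply Rimp01; auto.
  - rmm.
  - intros g. specialize (S2 g). specialize (Key g). pose proof (Hd g). pose proof (Hd' g). pose proof (HI F g).
    unfold Rimp in *. rmm.
Qed.

Lemma natemb01 (A : Pavelka) x F : 0 <= natemb A x F <= 1.
Proof. unfold natemb. apply (proj1 (quot_val_spec A F)). Qed.

Lemma natemb_mulc (A : Pavelka) r x F : inQ01 r ->
  natemb A (mvmul A (cst A r) x) F = Rmax 0 (Q2R r + natemb A x F - 1).
Proof.
  intros Hr. unfold natemb. destruct (quot_val_spec A F) as [Hq _].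
  rewrite uh_mul, uh_cst; auto.
Qed.

Lemma natemb_mono (A : Pavelka) x y F : mvle A x y -> natemb A x F <= natemb A y F.
Proof. intros H. unfold natemb. apply uh_mono; auto. apply (proj1 (quot_val_spec A F)). Qed.

Theorem theorem17 (A : Pavelka) (hss : semisimple_mv A) (O : A -> A)
  (hO : closure_op A O) :
  (forall (x : A) (r : Q), inQ01 r ->
     mvle A (mvmul A (cst A r) (O x)) (O (mvmul A (cst A r) x)))
  <->
  (exists (G : Type) (I : SpecM A -> G -> R),
     (forall m g, 0 <= I m g <= 1) /\
     forall x : A, natemb A (O x) = hI I (dI I (natemb A x))).
Proof.
  destruct hO as [Hmono [Hext Hidem]]. split.
  - intros Hi. exists (car A), (fun F g => natemb A (O g) F). split.
    { intros; apply natemb01. }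
    intros x. apply functional_extensionality. intros F.
    set (I := fun (F : SpecM A) (g : A) => natemb A (O g) F).
    assert (HI : forall m g, 0 <= I m g <= 1) by (intros; apply natemb01).
    assert (Hx : forall m, 0 <= natemb A x m <= 1) by (intros; apply natemb01).
    apply Rle_antisym.
    + unfold hI. apply inf01_spec.
      { intros g. apply Rimp01; auto. apply dI01; auto. }
      { apply natemb01. }
      intros g. set (d := dI I (natemb A x) g). set (v := natemb A (O x) F). set (w := I F g).
      assert (Hd : 0 <= d <= 1) by (apply dI01; auto).
      assert (Hv : 0 <= v <= 1) by apply natemb01.
      assert (Hw : 0 <= w <= 1) by apply HI.
      destruct (Rle_dec v (Rimp d w)) as [ok|nok]; auto. exfalso.
      assert (Hgt : w < d + v - 1) by (unfold Rimp in nok; rmm).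
      destruct (Qdense01 (Rmax 0 (w + 1 - v)) d) as [r [Hr [Er1 Er2]]]; try rmm.
      assert (Hle : mvle A (mvmul A (cst A r) x) (O g)).
      { apply order_reflect; auto. intros m. rewrite natemb_mulc by auto.
        pose proof (proj1 (proj2 (inf01_spec (fun m => Rimp (natemb A x m) (I m g))
          (fun m => Rimp01 _ _ (Hx m) (HI m g)))) m) as X.
        fold (dI I (natemb A x) g) in X. fold d in X. unfold I, Rimp in X.
        pose proof (Hx m). pose proof (natemb01 A (O g) m). unfold inQ01 in Hr. rmm. }
      assert (H2 : mvle A (mvmul A (cst A r) (O x)) (O g)).
      { eapply mvle_trans. apply Hi; auto. rewrite <- (Hidem g). apply Hmono. exact Hle. }
      apply natemb_mono with (F := F) in H2. rewrite natemb_mulc in H2 by auto.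
      fold v in H2. unfold w, I in *. rmm.
    + unfold hI. pose proof (proj1 (proj2 (inf01_spec (fun g => Rimp (dI I (natemb A x) g) (I F g))
          (fun g => Rimp01 _ _ (dI01 I _ g HI Hx) (HI F g)))) x) as X.
      assert (Hd1 : dI I (natemb A x) x = 1).
      { apply Rle_antisym. apply dI01; auto. unfold dI. apply inf01_spec.
        intros m. apply Rimp01; auto. lra.
        intros m. unfold Rimp, I. pose proof (natemb_mono A _ _ m (Hext x)). pose proof (Hx m).
        pose proof (natemb01 A (O x) m). rmm. }
      cbv beta in X. rewrite Hd1 in X. pose proof (natemb01 A (O x) F). unfold I in *. unfold Rimp in *. rmm.
  - intros [G [I [HI Heq]]] x r Hr. apply order_reflect; auto. intros F.
    rewrite natemb_mulc by auto. rewrite (Heq x), (Heq (mvmul A (cst A r) x)).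
    replace (natemb A (mvmul A (cst A r) x)) with (fun m => Rmax 0 (Q2R r + natemb A x m - 1)).
    + apply main_ineq; auto. intros; apply natemb01.
    + apply functional_extensionality. intros m. rewrite natemb_mulc; auto.
Qed.
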